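(* Let $n\ge3$ and $c\ge1$. For every $t\in\{1,\dots,c\}$ and every $i\in\{1,\dots,n-2\}$, neither of the relations \[ \rho_i\sigma_{i+1,t}\sigma_{i,t}=\sigma_{i+1,t}\sigma_{i,t}\rho_{i+1},\qquad \rho_{i+1}\sigma_{i,t}\sigma_{i+1,t}=\sigma_{i,t}\sigma_{i+1,t}\rho_i \] holds in $UV_n(c)$; that is, imposing either relation yields a proper quotient of $UV_n(c)$.
   Context: $UV_n(c)$ is the group with generators $\rho_i$ ($1\le i\le n-1$), $\sigma_{i,t}$ ($1\le i\le n-1$, $1\le t\le c$) and relations $\rho_i\rho_{i+1}\rho_i=\rho_{i+1}\rho_i\rho_{i+1}$ ($1\le i\le n-2$), $\rho_i\rho_j=\rho_j\rho_i$ ($|i-j|\ge2$), $\rho_i^2=1$, $\sigma_{i,t}\sigma_{j,\ell}=\sigma_{j,\ell}\sigma_{i,t}$ ($|i-j|\ge2$, $1\le t,\ell\le c$), $\sigma_{i,t}\rho_j=\rho_j\sigma_{i,t}$ ($|i-j|\ge2$), $\rho_i\rho_{i+1}\sigma_{i,t}=\sigma_{i+1,t}\rho_i\rho_{i+1}$ ($1\le i\le n-2$, $1\le t\le c$). *)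

(* Defs.v *)
(* Finitely presented groups are not in the library,
   so we define a group presentation honestly: words in the generators with
   formal 1, product and inverse, and the congruence generated by the group
   axioms and the defining relations. *)
From mathcomp Require Import all_boot.
Set Implicit Arguments. Unset Strict Implicit. Unset Printing Implicit Defensive.

Inductive word (X : Type) : Type :=
  | W1 : word X
  | Wg : X -> word X
  | Wm : word X -> word X -> word X
  | Wi : word X -> word X.
Arguments W1 {X}.

Inductive pres_eq (X : Type) (R : word X -> word X -> Prop) :
    word X -> word X -> Prop :=
  | pe_rel u v : R u v -> pres_eq R u v
  | pe_refl u : pres_eq R u u
  | pe_sym u v : pres_eq R u v -> pres_eq R v u
  | pe_trans u v w : pres_eq R u v -> pres_eq R v w -> pres_eq R u w
  | pe_mul u u' v v' : pres_eq R u u' -> pres_eq R v v' ->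
      pres_eq R (Wm u v) (Wm u' v')
  | pe_inv u u' : pres_eq R u u' -> pres_eq R (Wi u) (Wi u')
  | pe_assoc u v w : pres_eq R (Wm (Wm u v) w) (Wm u (Wm v w))
  | pe_mul1l u : pres_eq R (Wm W1 u) u
  | pe_mul1r u : pres_eq R (Wm u W1) u
  | pe_mulVl u : pres_eq R (Wm (Wi u) u) W1.

(* Generators of UV_n(c): rho_i (1 <= i <= n-1), sigma_{i,t} (1 <= i <= n-1,
   1 <= t <= c), 1-based indexing as in the paper. *)
Inductive uvlabel : Type := LRho of nat | LSig of nat & nat.

Definition uv_valid (n c : nat) (g : uvlabel) : bool :=
  match g with
  | LRho i => (1 <= i) && (i <= n.-1)
  | LSig i t => [&& 1 <= i, i <= n.-1, 1 <= t & t <= c]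
  end.

Definition uvgen (n c : nat) := {g : uvlabel | uv_valid n c g}.

Definition uvw (n c : nat) := word (uvgen n c).

(* Generator words; an out-of-range label gives the trivial word (only ever
   used with in-range indices below). *)
Definition gw (n c : nat) (g : uvlabel) : uvw n c :=
  match @insub _ (uv_valid n c) (uvgen n c) g with
  | Some x => Wg x
  | None => W1
  end.

Definition rho (n c i : nat) : uvw n c := gw n c (LRho i).
Definition sigma (n c i t : nat) : uvw n c := gw n c (LSig i t).

Definition far (i j : nat) : bool := (i + 2 <= j) || (j + 2 <= i).

Inductive uv_rel (n c : nat) : uvw n c -> uvw n c -> Prop :=
  | r_braid i : 1 <= i -> i <= n - 2 ->
      uv_rel (Wm (Wm (rho n c i) (rho n c i.+1)) (rho n c i))
             (Wm (Wm (rho n c i.+1) (rho n c i)) (rho n c i.+1))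
  | r_rcomm i j : 1 <= i <= n.-1 -> 1 <= j <= n.-1 -> far i j ->
      uv_rel (Wm (rho n c i) (rho n c j)) (Wm (rho n c j) (rho n c i))
  | r_rinv i : 1 <= i <= n.-1 ->
      uv_rel (Wm (rho n c i) (rho n c i)) W1
  | r_scomm i j t l : 1 <= i <= n.-1 -> 1 <= j <= n.-1 -> far i j ->
      1 <= t <= c -> 1 <= l <= c ->
      uv_rel (Wm (sigma n c i t) (sigma n c j l))
             (Wm (sigma n c j l) (sigma n c i t))
  | r_srcomm i j t : 1 <= i <= n.-1 -> 1 <= j <= n.-1 -> far i j ->
      1 <= t <= c ->
      uv_rel (Wm (sigma n c i t) (rho n c j)) (Wm (rho n c j) (sigma n c i t))
  | r_mixed i t : 1 <= i -> i <= n - 2 -> 1 <= t <= c ->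
      uv_rel (Wm (Wm (rho n c i) (rho n c i.+1)) (sigma n c i t))
             (Wm (sigma n c i.+1 t) (Wm (rho n c i) (rho n c i.+1))).

Definition uv_eq (n c : nat) : uvw n c -> uvw n c -> Prop := pres_eq (@uv_rel n c).

(* Main.v *)
Require Import Defs.
From mathcomp Require Import all_boot.
From mathcomp Require Import zify.
Set Implicit Arguments. Unset Strict Implicit. Unset Printing Implicit Defensive.

Definition sw (i x : nat) : nat :=
  if x == i then i.+1 else if x == i.+1 then i else x.

Definition evg (n c : nat) (g : uvgen n c) : (nat -> nat) * (nat -> nat) :=
  match val g with LRho i => (sw i, sw i) | LSig _ _ => (id, id) end.

Fixpoint ev (n c : nat) (u : uvw n c) : (nat -> nat) * (nat -> nat) :=
  match u with
  | W1 => (id, id)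
  | Wg g => evg g
  | Wm u v => (fun x => (ev u).1 ((ev v).1 x), fun x => (ev v).2 ((ev u).2 x))
  | Wi u => ((ev u).2, (ev u).1)
  end.

Definition E (n c : nat) (u v : uvw n c) : Prop :=
  forall x, (ev u).1 x = (ev v).1 x /\ (ev u).2 x = (ev v).2 x.

Ltac cs := repeat (match goal with |- context [?a == ?b] =>
  lazymatch a with context[if _ then _ else _] => fail | _ =>
  lazymatch b with context[if _ then _ else _] => fail | _ =>
  case: (a =P b) => /= ? end end end).

Lemma swK i x : sw i (sw i x) = x.
Proof. rewrite /sw; cs; lia. Qed.

Lemma ev_inv n c (u : uvw n c) x :
  (ev u).2 ((ev u).1 x) = x /\ (ev u).1 ((ev u).2 x) = x.
Proof.
elim: u x => [|g|u IHu v IHv|u IHu] x /=; first by [].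
- rewrite /evg; case: (val g) => [i|i t] /=; by rewrite ?swK.
- case: (IHv ((ev u).2 x)) => _ ->; case: (IHu x) => _ ->.
  case: (IHu ((ev v).1 x)) => -> _; by case: (IHv x) => -> _.
- by case: (IHu x) => -> ->.
Qed.

Lemma ev_rho n c i : (1 <= i) && (i <= n.-1) -> ev (rho n c i) = (sw i, sw i).
Proof.
move=> h; rewrite /rho /gw; case: insubP => [y _ hy|hn] /=.
  by rewrite /evg hy.
by rewrite /= h in hn.
Qed.

Lemma ev_sig n c i t : ev (sigma n c i t) = (id, id).
Proof.
rewrite /sigma /gw; case: insubP => [y _ hy|hn] //=.
by rewrite /evg hy.
Qed.

Lemma sw_far i j x : far i j -> sw i (sw j x) = sw j (sw i x).
Proof. rewrite /far /sw => h; cs; lia. Qed.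

Lemma sw_braid i x : sw i (sw i.+1 (sw i x)) = sw i.+1 (sw i (sw i.+1 x)).
Proof. rewrite /sw; cs; lia. Qed.

Lemma E_sound n c (u v : uvw n c) : uv_eq u v -> E u v.
Proof.
elim => {u v}.
- move=> u v []; clear u v.
  + move=> i h1 h2 x /=; rewrite !ev_rho; try lia.
    by rewrite /= sw_braid.
  + move=> i j hi hj hf x /=; rewrite !ev_rho //=; by rewrite sw_far.
  + move=> i hi x /=; rewrite ev_rho //=; by rewrite swK.
  + by move=> i j t l *; rewrite /E /= !ev_sig.
  + move=> i j t hi hj hf ht x /=; by rewrite ev_rho // ev_sig.
  + move=> i t h1 h2 ht x /=; rewrite !ev_rho ?ev_sig //=; lia.
- by [].
- move=> u v _ H x; by case: (H x).
- move=> u v w _ H1 _ H2 x; case: (H1 x) => -> ->; exact: H2.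
- move=> u u' v v' _ H1 _ H2 x /=.
  case: (H2 x) => -> _; case: (H1 ((ev v').1 x)) => -> _.
  case: (H1 x) => _ ->; by case: (H2 ((ev u').2 x)) => _ ->.
- move=> u u' _ H x /=; by case: (H x).
- by [].
- by [].
- by [].
- move=> u x /=; by case: (ev_inv u x).
Qed.

Theorem proposition5p1 (n c : nat) :
  3 <= n -> 1 <= c ->
  forall t i : nat, 1 <= t <= c -> 1 <= i <= n - 2 ->
    ~ uv_eq (Wm (Wm (rho n c i) (sigma n c i.+1 t)) (sigma n c i t))
            (Wm (Wm (sigma n c i.+1 t) (sigma n c i t)) (rho n c i.+1))
    /\
    ~ uv_eq (Wm (Wm (rho n c i.+1) (sigma n c i t)) (sigma n c i.+1 t))
            (Wm (Wm (sigma n c i t) (sigma n c i.+1 t)) (rho n c i)).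
Proof.
move=> hn hc t i ht hi.
have v1 : (1 <= i) && (i <= n.-1) by apply/andP; lia.
have v2 : (1 <= i.+1) && (i.+1 <= n.-1) by apply/andP; lia.
split=> /E_sound /(_ i) [] /=; rewrite !ev_sig !ev_rho //= /sw;
  cs; lia.
Qed.
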